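(* Let $L$ be a finite distributive lattice, $c(L)$ its set of complemented elements, and for $x\in c(L)$ with complement $x'$ let $L(x):=\{(y,z)\in\widetilde L: y\le x,\ z\le x'\}$. Then $$\widetilde L=\bigcup_{x\in c(L)}L(x)$$ if and only if every connected component of the Hasse diagram of the poset $\mathcal J(L)$ has a unique minimal element (i.e. has a least element).
   Context: $L$ has least element $\bot$ and greatest element $\top$; $x\in L$ is complemented if there is $x'$ with $x\wedge x'=\bot$, $x\vee x'=\top$ (the complement is unique since $L$ is distributive). $\widetilde L:=\{(x,y)\in L^2: x\wedge y=\bot\}$ with the product order. $\mathcal J(L)$ is the set of join-irreducible elements of $L$ (elements covering exactly one element), with the order induced from $L$. *)

(* Defs.v *)
From HB Require Import structures.
From mathcomp Require Import all_boot all_order.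
Set Implicit Arguments. Unset Strict Implicit. Unset Printing Implicit Defensive.
Import Order.TTheory.
Local Open Scope order_scope.

Section Defs.
Context {d : Order.disp_t} {L : finTBDistrLatticeType d}.

Definition is_compl (x x' : L) : Prop := x `&` x' = \bot /\ x `|` x' = \top.

Definition complemented (x : L) : Prop := exists x', is_compl x x'.

Definition in_Ltilde (y z : L) : Prop := y `&` z = \bot.

(* (y,z) \in L(x) (x complemented, complement x' -- unique by distributivity) *)
Definition in_Lx (x y z : L) : Prop :=
  exists x', is_compl x x' /\ in_Ltilde y z /\ y <= x /\ z <= x'.

Definition coversb (y x : L) : bool :=
  (y < x) && [forall z : L, ~~ ((y < z) && (z < x))].

Definition join_irr (x : L) : bool := #|[set y : L | coversb y x]| == 1%N.

Definition coverJ (a b : L) : bool :=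
  [&& join_irr a, join_irr b, a < b &
      [forall c : L, ~~ [&& join_irr c, a < c & c < b]]].

Definition hasseJ (a b : L) : bool := coverJ a b || coverJ b a.

Definition same_component (a b : L) : bool := join_irr a && connect hasseJ a b.

Definition minimal_in_component (a m : L) : Prop :=
  same_component a m /\ forall b, same_component a b -> b <= m -> b = m.

End Defs.

(* Main.v *)
Require Import Defs.
From HB Require Import structures.
From mathcomp Require Import all_boot all_order.
Import Order.TTheory.
Local Open Scope order_scope.

Section Aux.
Context {d : Order.disp_t} {L : finTBDistrLatticeType d}.
Implicit Types (x y z u v w j k a b m : L).

Definition dn w := #|[set t : L | t <= w]|.

Lemma lt_card {u w} : u < w -> (dn u < dn w)%N.
Proof.
move=> uw; apply: proper_card; rewrite properE; apply/andP; split.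
  by apply/subsetP => t; rewrite !inE => h; exact: le_trans h (ltW uw).
by apply/subsetPn; exists w; rewrite !inE ?lexx ?(lt_geF uw).
Qed.

Lemma ex_max (P : pred L) u : P u ->
  exists c, P c /\ forall c', P c' -> ~ (c < c').
Proof.
move=> Pu; case: (arg_maxnP dn Pu) => c Pc Hc; exists c; split => // c' Pc' lt.
have := Hc _ Pc'; move=> /= h; have := lt_card lt; by rewrite ltnNge h.
Qed.

Lemma ex_min (P : pred L) u : P u ->
  exists c, P c /\ forall c', P c' -> ~ (c' < c).
Proof.
move=> Pu; case: (arg_minnP dn Pu) => c Pc Hc; exists c; split => // c' Pc' lt.
have := Hc _ Pc'; move=> /= h; have := lt_card lt; by rewrite ltnNge h.
Qed.

Lemma coversP {y x} : coversb y x -> y < x /\ forall z, y < z -> z < x -> False.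
Proof.
case/andP => yx /forallP H; split => // z h1 h2.
by have := H z; rewrite h1 h2.
Qed.

Lemma cover_above {u j} : u < j -> exists c, coversb c j /\ u <= c.
Proof.
move=> uj; have [c [/andP [uc cj] Hc]] := @ex_max (fun c => (u <= c) && (c < j)) u ltac:(by rewrite /= lexx uj).
exists c; split => //; apply/andP; split => //; apply/forallP => z.
apply/negP => /andP [cz zj]; apply: (Hc z) => //.
by rewrite zj (le_trans uc (ltW cz)).
Qed.

Lemma join_irr_neq0 {j} : join_irr j -> j != \bot.
Proof.
move=> Jj; apply/negP => /eqP E; move: Jj; rewrite /join_irr.
have -> : [set y : L | coversb y j] = set0.
  by apply/setP => y; rewrite !inE /coversb E ltx0.
by rewrite cards0.
Qed.

Lemma join_irr_join {j u v} : join_irr j -> u < j -> v < j -> u `|` v < j.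
Proof.
move=> Jj uj vj.
have [c1 [C1 uc1]] := cover_above uj.
have [c2 [C2 vc2]] := cover_above vj.
move: Jj; rewrite /join_irr => /cards1P [c E].
have : c1 \in [set y : L | coversb y j] by rewrite inE.
have : c2 \in [set y : L | coversb y j] by rewrite inE.
rewrite E !inE => /eqP e2 /eqP e1; subst c1 c2.
have [cj _] := coversP C1.
by apply: le_lt_trans cj; rewrite leUx uc1 vc2.
Qed.

Lemma join_prime {j a b} : join_irr j -> j <= a `|` b -> j <= a \/ j <= b.
Proof.
move=> Jj h.
have E : j = (j `&` a) `|` (j `&` b) by rewrite -meetUr; apply/esym/meet_idPl.
case: (eqVneq (j `&` a) j) => [ea|na]; first by left; rewrite -ea leIr.
case: (eqVneq (j `&` b) j) => [eb|nb]; first by right; rewrite -eb leIr.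
have : (j `&` a) `|` (j `&` b) < j.
  by apply: join_irr_join => //; rewrite lt_neqAle ?na ?nb leIl.
by rewrite -E ltxx.
Qed.

Lemma join_prime_big {j} {P : pred L} : join_irr j ->
  j <= \join_(i | P i) i -> exists i, P i /\ j <= i.
Proof.
move=> Jj; apply: (@big_rec _ (fun w => j <= w -> exists i, P i /\ j <= i)).
  by rewrite lex0 (negbTE (join_irr_neq0 Jj)).
move=> i w Pi IH /(join_prime Jj) [h|h]; first by exists i.
exact: IH.
Qed.

Lemma rep_le w v : (forall j, join_irr j -> j <= w -> j <= v) -> w <= v.
Proof.
suff: forall n w, (dn w < n)%N ->
   (forall j, join_irr j -> j <= w -> j <= v) -> w <= v by apply; apply: ltnSn.
elim=> [//|n IH] {}w Hn Hj.
case: (eqVneq w \bot) => [->|wn0]; first by rewrite le0x.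
case Jw: (join_irr w); first by apply: Hj.
have [c1 [C1 _]] := @cover_above \bot w ltac:(by rewrite /= lt0x).
set S := [set y : L | coversb y w].
have c1S : c1 \in S by rewrite inE.
have [c2 c2S c2n] : exists2 c2, c2 \in S & c2 != c1.
  case: (boolP [exists c2, (c2 \in S) && (c2 != c1)]).
    by case/existsP => c2 /andP [] ? ?; exists c2.
  move=> /negP H; exfalso; move: Jw; rewrite /join_irr -/S.
  have : (#|S| <= 1)%N.
    rewrite -(cards1 c1); apply: subset_leq_card; apply/subsetP => t tS.
    rewrite inE; apply/negPn/negP => tn; apply: H; apply/existsP; exists t.
    by rewrite tS tn.
  have : (0 < #|S|)%N by apply/card_gt0P; exists c1.
  by case: #|S| => [|[|]].
move: c2S; rewrite inE => C2.
have [c1w H1] := coversP C1; have [c2w H2] := coversP C2.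
have le12 : c1 `|` c2 <= v.
  rewrite leUx; apply/andP; split; apply: IH.
  - by rewrite -ltnS; apply: leq_trans Hn; apply: lt_card.
  - by move=> j Jj jc; apply: Hj => //; exact: le_trans jc (ltW c1w).
  - by rewrite -ltnS; apply: leq_trans Hn; apply: lt_card.
  - by move=> j Jj jc; apply: Hj => //; exact: le_trans jc (ltW c2w).
apply: le_trans le12.
case: (eqVneq (c1 `|` c2) w) => [->//|ne].
have lw : c1 `|` c2 < w by rewrite lt_neqAle ne leUx !ltW.
case: (eqVneq c1 (c1 `|` c2)) => [e|n1].
  have c21 : c2 < c1 by rewrite lt_neqAle c2n e leUr.
  by case: (H2 _ c21 c1w).
by case: (H1 (c1 `|` c2)) => //; rewrite lt_neqAle n1 leUl.
Qed.

Lemma nonzero_has_irr w : w != \bot -> exists j, join_irr j /\ j <= w.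
Proof.
move=> wn; case: (boolP [exists j, join_irr j && (j <= w)]).
  by case/existsP => j /andP [] ? ?; exists j.
move=> /negP H; exfalso; move: wn; rewrite -lex0 => /negP; apply.
apply: rep_le => j Jj jw; exfalso; apply: H; apply/existsP; exists j.
by rewrite Jj jw.
Qed.

Lemma comp_connect {k j} : join_irr k -> join_irr j -> k <= j -> connect hasseJ k j.
Proof.
move=> Jk.
suff: forall n j, (dn j < n)%N -> join_irr j -> k <= j -> connect hasseJ k j.
  by move=> H Jj kj; apply: (H _ j (ltnSn _)).
elim=> [//|n IH] {}j Hn Jj kj.
case: (eqVneq k j) => [->|nkj]; first exact: connect0.
have kltj : k < j by rewrite lt_neqAle nkj.
have [c [/and3P [Jc kc cj] Hc]] :=
  @ex_max (fun c => [&& join_irr c, k <= c & c < j]) k ltac:(by rewrite /= Jk lexx kltj).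
apply: connect_trans (IH c _ Jc kc) (connect1 _).
  by rewrite -ltnS; apply: leq_trans Hn; apply: lt_card.
apply/orP; left; rewrite /coverJ Jc Jj cj; apply/forallP => c'.
apply/negP => /and3P [Jc' cc' c'j]; apply: (Hc c') => //.
by rewrite Jc' c'j (le_trans kc (ltW cc')).
Qed.

Lemma hasse_sym : symmetric (@hasseJ _ L).
Proof. by move=> a b; rewrite /hasseJ orbC. Qed.

Lemma connect_symJ a b : connect (@hasseJ _ L) a b = connect hasseJ b a.
Proof. exact: (sym_connect_sym hasse_sym). Qed.

Lemma comp_irr {a m} : join_irr a -> connect (@hasseJ _ L) a m -> join_irr m.
Proof.
move=> Ja C.
have cl : closed (@hasseJ _ L) (fun t => join_irr t).
  move=> u v; rewrite /hasseJ /coverJ => /orP [] /and4P [Ju Jv _ _];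
  by rewrite !unfold_in /= Ju Jv.
by have := closed_connect cl C; rewrite !unfold_in /= Ja.
Qed.

Lemma min_below {a b} : join_irr a -> same_component a b ->
  exists m, minimal_in_component a m /\ m <= b.
Proof.
move=> Ja Sb.
have [m [/andP [Sm mb] Hm]] :=
  @ex_min (fun c => same_component a c && (c <= b)) b ltac:(by rewrite /= Sb lexx).
exists m; split => //; split => // c Sc cm.
apply/eqP; rewrite eq_le cm /=; apply/negP => mc.
have cltm : c < m by rewrite lt_neqAle cm andbT; apply/negP => /eqP e; subst c; move: mc; rewrite lexx.
by apply: (Hm c) => //; rewrite Sc (le_trans cm mb).
Qed.

End Aux.

Theorem mainTheorem4 (d : Order.disp_t) (L : finTBDistrLatticeType d) :
  (forall y z : L, in_Ltilde y z <-> exists x : L, complemented x /\ in_Lx x y z)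
  <->
  (forall a : L, join_irr a ->
     exists m : L, minimal_in_component a m /\
       forall m' : L, minimal_in_component a m' -> m' = m).
Proof.
split.
- move=> H a Ja.
  have [m [Mm _]] := @min_below _ _ a a Ja ltac:(by rewrite /= /same_component Ja connect0).
  exists m; split => // m' Mm'.
  case: (eqVneq m' m) => [//|ne]; exfalso.
  case: Mm => /andP [_ Cm] Hm; case: Mm' => /andP [_ Cm'] Hm'.
  have Jm := comp_irr Ja Cm; have Jm' := comp_irr Ja Cm'.
  have bot : m `&` m' = \bot.
    apply/eqP; rewrite -lex0; apply: rep_le => k Jk; rewrite lexI => /andP [km km'].
    exfalso.
    have Sk1 : same_component a k.
      rewrite /same_component Ja; apply: connect_trans Cm _.
      by rewrite connect_symJ; apply: comp_connect.
    have e1 := Hm k Sk1 km; have e2 := Hm' k Sk1 km'.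
    by move: ne; rewrite -e1 -e2 eqxx.
  have [x [_ [x' [[cI cU] [_ [mx m'x']]]]]] := (H m m').1 bot.
  have cl : closed (@hasseJ _ L) (fun t => t <= x).
    have side : forall u v, join_irr u -> join_irr v -> u <= v -> (u <= x) = (v <= x).
      move=> u v Ju Jv uv; apply/idP/idP => [ux|]; last by move=> vx; apply: le_trans vx.
      have : v <= x `|` x' by rewrite cU lex1.
      case/(join_prime Jv) => // vx'; exfalso.
      have : u <= x `&` x' by rewrite lexI ux (le_trans uv vx').
      by rewrite cI lex0 (negbTE (join_irr_neq0 Ju)).
    move=> u v; rewrite /hasseJ /coverJ !unfold_in /= => /orP [] /and4P [Ju Jv uv _].
      by apply: side => //; apply: ltW.
    by apply/esym/side => //; apply: ltW.
  have C : connect hasseJ m m'.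
    by apply: connect_trans _ Cm'; rewrite connect_symJ.
  have := closed_connect cl C; rewrite !unfold_in /= mx => /esym m'x.
  have : m' <= x `&` x' by rewrite lexI m'x m'x'.
  by rewrite cI lex0 (negbTE (join_irr_neq0 Jm')).
- move=> R y z; split; last first.
    by case=> x [_ [x' [_ [h _]]]].
  move=> yz.
  pose A := fun j : L => join_irr j && [exists j0, [&& join_irr j0, j0 <= y & connect hasseJ j0 j]].
  pose B := fun j : L => join_irr j && ~~ [exists j0, [&& join_irr j0, j0 <= y & connect hasseJ j0 j]].
  pose x := \join_(j | A j) j.
  pose x' := \join_(j | B j) j.
  have cI : x `&` x' = \bot.
    apply/eqP; rewrite -lex0; apply: rep_le => k Jk; rewrite lexI => /andP [kx kx'].
    exfalso.
    have [j [/andP [Jj /existsP [j0 /and3P [Jj0 j0y Cj0]]] kj]] := join_prime_big Jk kx.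
    have [j' [/andP [Jj' N] kj']] := join_prime_big Jk kx'.
    move/negP: N; apply; apply/existsP; exists j0; rewrite Jj0 j0y /=.
    apply: connect_trans Cj0 _; apply: connect_trans (comp_connect Jk Jj' kj').
    by rewrite connect_symJ; apply: comp_connect.
  have cU : x `|` x' = \top.
    apply/eqP; rewrite eq_le lex1 /=; apply: rep_le => j Jj _.
    case Aj: (A j).
      by apply: le_trans (leUl _ _); apply: joins_sup.
    apply: le_trans (leUr _ _); apply: joins_sup.
    by move: Aj; rewrite /A /B Jj /= => ->.
  exists x; split; first by exists x'.
  exists x'; split; first by [].
  split; first by [].
  split.
    apply: rep_le => j Jj jy; apply: joins_sup.
    by rewrite /A Jj; apply/existsP; exists j; rewrite Jj jy connect0.
  apply: rep_le => j Jj jz; apply: joins_sup.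
  rewrite /B Jj /=; apply/negP => /existsP [j0 /and3P [Jj0 j0y Cj0]].
  have Sj : same_component j j by rewrite /same_component Jj connect0.
  have Sj0 : same_component j j0 by rewrite /same_component Jj connect_symJ.
  have [m1 [M1 m1j]] := min_below Jj Sj.
  have [m2 [M2 m2j0]] := min_below Jj Sj0.
  have [m [_ U]] := R j Jj.
  have e : m1 = m2 by rewrite (U _ M1) (U _ M2).
  case: M1 => /andP [_ C1] _.
  have Jm1 := comp_irr Jj C1.
  have : m1 <= y `&` z by rewrite lexI (le_trans m1j jz) e (le_trans m2j0 j0y).
  by rewrite yz lex0 (negbTE (join_irr_neq0 Jm1)).
Qed.
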